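(* Let $n,m,p\ge1$, let $A:\mathbb{R}^p\to\mathbb{R}^{n\times n}$, $B:\mathbb{R}^p\to\mathbb{R}^{n\times m}$ be known affine functions, and let $Q\in\mathbb{R}^{n\times n}$, $R\in\mathbb{R}^{m\times m}$ be symmetric positive definite. Consider the system $$x_{k+1}=A(\theta_k)x_k+B(\theta_k)u_k+w_k,\qquad k\in\mathbb{N},$$ with state $x_k\in\mathbb{R}^n$, input $u_k\in\mathbb{R}^m$, disturbance $w_k\in\mathbb{R}^n$ and time-varying parameter $\theta_k\in\mathbb{R}^p$. Assume: (i) there is $\bar W\ge0$ with $\|w_k\|\le\bar W$ for all $k$; (ii) there is a known compact convex set $\Theta\subset\mathbb{R}^p$ with $\theta_k\in\Theta$ for all $k$, such that $(A(\theta),B(\theta))$ is stabilizable for every $\theta\in\Theta$. Let $\mu>0$ and let $\{\hat\theta_k\}\subset\Theta$ be any sequence of parameter estimates, and apply the certainty-equivalent LQR input $u_k=K_{\mathrm{LQR}}(\hat\theta_k)x_k$. Define the nominal prediction $\hat x_{1|k}=A(\hat\theta_k)x_k+B(\hat\theta_k)u_k$ and prediction error $e_{1|k}=x_{k+1}-\hat x_{1|k}-w_k$. Suppose that the estimates satisfy $$\|\hat\theta_{k+1}-\hat\theta_k\|\le\sqrt{\mu}\,\|e_{1|k}+w_k\|\quad\text{for all }k\in\mathbb{N},$$ and that the state is uniformly bounded: $\|x_k\|\le X$ for all $k\in\mathbb{N}$, for some $X>0$. Then there exist constants $\alpha,\beta,\gamma>0$ such that, with $V(x,\theta)=x^\top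 P(\theta)x$, $$V(x_{k+1},\hat\theta_{k+1})-V(x_k,\hat\theta_k)\le-\alpha\|x_k\|^2+\beta\|e_{1|k}\|^2+\gamma\|w_k\|^2\quad\text{for all }k\in\mathbb{N}.$$
   Context: For $\theta\in\Theta$, $P(\theta)$ denotes the unique positive definite solution of the discrete-time algebraic Riccati equation $P = A(\theta)^\top P A(\theta) - A(\theta)^\top P B(\theta)(R+B(\theta)^\top P B(\theta))^{-1}B(\theta)^\top P A(\theta) + Q$, and $K_{\mathrm{LQR}}(\theta) = -(R+B(\theta)^\top P(\theta)B(\theta))^{-1}B(\theta)^\top P(\theta)A(\theta)$ is the corresponding LQR gain. $\|\cdot\|$ is the Euclidean norm on vectors and the spectral norm on matrices; $\mathbb{N}=\{0,1,2,\dots\}$. *)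

(* Defs.v *)
From HB Require Import structures.
From mathcomp Require Import all_boot all_order all_algebra.
From mathcomp Require Import all_classical all_reals all_analysis.
Set Implicit Arguments. Unset Strict Implicit. Unset Printing Implicit Defensive.
Import Order.TTheory GRing.Theory Num.Theory.
Import numFieldNormedType.Exports.
Local Open Scope ring_scope.
Local Open Scope classical_set_scope.

Definition vnorm {R : realType} {n : nat} (v : 'cV[R]_n) : R :=
  Num.sqrt (\sum_(i < n) (v i ord0) ^+ 2).

Definition qform {R : realType} {n : nat} (M : 'M[R]_n) (x : 'cV[R]_n) : R :=
  ((x^T *m M *m x) ord0 ord0).

Definition sym_posdef {R : realType} {n : nat} (M : 'M[R]_n) : Prop :=
  M^T = M /\ forall x : 'cV[R]_n, x != 0 -> 0 < qform M x.

Definition affine_map {R : realType} {p a b : nat} (f : 'cV[R]_p -> 'M[R]_(a, b)) : Prop :=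
  exists (F0 : 'M[R]_(a, b)) (F : 'I_p -> 'M[R]_(a, b)),
    forall th : 'cV[R]_p, f th = F0 + \sum_(i < p) th i ord0 *: F i.

Definition stabilizable {R : realType} {n m : nat}
  (A : 'M[R]_n) (B : 'M[R]_(n, m)) : Prop :=
  exists K : 'M[R]_(m, n), forall x0 : 'cV[R]_n,
    (fun k : nat => vnorm (iter k (mulmx (A + B *m K)) x0)) @ \oo --> (0 : R).

Definition DARE {R : realType} {n m : nat} (A : 'M[R]_n) (B : 'M[R]_(n, m))
  (Q : 'M[R]_n) (Rm : 'M[R]_m) (P : 'M[R]_n) : Prop :=
  P = A^T *m P *m A
      - A^T *m P *m B *m invmx (Rm + B^T *m P *m B) *m B^T *m P *m A + Q.

Definition K_LQR {R : realType} {n m : nat} (A : 'M[R]_n) (B : 'M[R]_(n, m))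
  (Rm : 'M[R]_m) (P : 'M[R]_n) : 'M[R]_(m, n) :=
  - (invmx (Rm + B^T *m P *m B) *m B^T *m P *m A).

(* Main.v *)
Require Import Defs.
From HB Require Import structures.
From mathcomp Require Import all_boot all_order all_algebra.
From mathcomp Require Import all_classical all_reals all_analysis.
From mathcomp Require Import ring lra.
Import Order.TTheory GRing.Theory Num.Theory.
Import numFieldNormedType.Exports.
Local Open Scope ring_scope.
Local Open Scope classical_set_scope.

Section Bil.
Context {R : realType}.
Definition bil {k l : nat} (M : 'M[R]_(k,l)) (a : 'cV[R]_k) (b : 'cV[R]_l) : R :=
  (a^T *m M *m b) ord0 ord0.

Lemma qformE {n} (M : 'M[R]_n) x : qform M x = bil M x x.
Proof. by []. Qed.

Lemma bilDl {k l} (M : 'M[R]_(k,l)) a a' b : bil M (a + a') b = bil M a b + bil M a' b.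
Proof. by rewrite /bil linearD /= !mulmxDl mxE. Qed.
Lemma bilDr {k l} (M : 'M[R]_(k,l)) a b b' : bil M a (b + b') = bil M a b + bil M a b'.
Proof. by rewrite /bil !mulmxDr mxE. Qed.
Lemma bilNl {k l} (M : 'M[R]_(k,l)) a b : bil M (- a) b = - bil M a b.
Proof. by rewrite /bil linearN /= !mulNmx mxE. Qed.
Lemma bilNr {k l} (M : 'M[R]_(k,l)) a b : bil M a (- b) = - bil M a b.
Proof. by rewrite /bil !mulmxN mxE. Qed.
Lemma bilZl {k l} (M : 'M[R]_(k,l)) c a b : bil M (c *: a) b = c * bil M a b.
Proof. by rewrite /bil linearZ /= -!scalemxAl mxE. Qed.
Lemma bilZr {k l} (M : 'M[R]_(k,l)) c a b : bil M a (c *: b) = c * bil M a b.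
Proof. by rewrite /bil -!scalemxAr mxE. Qed.
Lemma bilDM {k l} (M N : 'M[R]_(k,l)) a b : bil (M + N) a b = bil M a b + bil N a b.
Proof. by rewrite /bil mulmxDr mulmxDl mxE. Qed.
Lemma bilNM {k l} (M : 'M[R]_(k,l)) a b : bil (- M) a b = - bil M a b.
Proof. by rewrite /bil mulmxN mulNmx mxE. Qed.
Lemma bilBM {k l} (M N : 'M[R]_(k,l)) a b : bil (M - N) a b = bil M a b - bil N a b.
Proof. by rewrite bilDM bilNM. Qed.
Lemma bilZM {k l} (M : 'M[R]_(k,l)) c a b : bil (c *: M) a b = c * bil M a b.
Proof. by rewrite /bil -scalemxAr -scalemxAl mxE. Qed.
Lemma bil_mull {k k' l} (F : 'M[R]_(k,k')) (M : 'M[R]_(k,l)) a b :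
  bil M (F *m a) b = bil (F^T *m M) a b.
Proof. by rewrite /bil trmx_mul !mulmxA. Qed.
Lemma bil_mulr {k l l'} (G : 'M[R]_(l,l')) (M : 'M[R]_(k,l)) a b :
  bil M a (G *m b) = bil (M *m G) a b.
Proof. by rewrite /bil !mulmxA. Qed.
Lemma bil_tr {k l} (M : 'M[R]_(k,l)) a b : bil M a b = bil M^T b a.
Proof.
rewrite /bil -[in LHS](trmxK (a^T *m M *m b)) mxE !trmx_mul trmxK.
by rewrite mulmxA.
Qed.
Lemma bil0l {k l} (M : 'M[R]_(k,l)) b : bil M 0 b = 0.
Proof. by rewrite /bil trmx0 !mul0mx mxE. Qed.
Lemma bil0r {k l} (M : 'M[R]_(k,l)) a : bil M a 0 = 0.
Proof. by rewrite /bil !mulmx0 mxE. Qed.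
End Bil.
Arguments bil {R k l}.
Section CS.
Context {R : realType}.
Variables (n m : nat) (A : 'M[R]_n) (B : 'M[R]_(n,m)) (Q : 'M[R]_n) (Rm : 'M[R]_m) (P : 'M[R]_n).
Hypothesis PT : P^T = P.
Hypothesis RT : Rm^T = Rm.
Hypothesis Munit : (Rm + B^T *m P *m B) \in unitmx.
Hypothesis Hdare : DARE A B Q Rm P.

Let M := Rm + B^T *m P *m B.
Let K := K_LQR A B Rm P.

Lemma MK_eq : M *m K = - (B^T *m P *m A).
Proof.
rewrite /K /K_LQR mulmxN; congr (- _).
have -> : invmx (Rm + B^T *m P *m B) *m B^T *m P *m A = invmx M *m (B^T *m P *m A).
  by rewrite !mulmxA.
by rewrite mulKVmx.
Qed.

Lemma MT_eq : M^T = M.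
Proof. by rewrite /M linearD /= RT !trmx_mul trmxK PT mulmxA. Qed.

Lemma KT_eq : K^T = - (A^T *m P *m B *m invmx M).
Proof.
by rewrite /K /K_LQR linearN /= !trmx_mul trmx_inv MT_eq PT !mulmxA trmxK.
Qed.

Lemma dare_K : P = A^T *m P *m A - K^T *m M *m K + Q.
Proof.
rewrite {1}Hdare; congr (_ - _ + _).
rewrite -[K^T *m M *m K]mulmxA MK_eq KT_eq mulmxN mulNmx opprK.
by rewrite /M !mulmxA.
Qed.

Lemma CS_identity x v :
  bil P (A *m x + B *m v) (A *m x + B *m v) + bil Q x x + bil Rm v v
  = bil P x x + bil M (v - K *m x) (v - K *m x).
Proof.
have h1 : bil P x x = bil (A^T *m P *m A) x x - bil (K^T *m M *m K) x x + bil Q x x.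
  by rewrite {1}dare_K !bilDM bilNM.
have h2 : bil P (A *m x) (B *m v) = bil (B^T *m P *m A) v x.
  by rewrite bil_mull bil_mulr bil_tr !trmx_mul trmxK PT !mulmxA.
have h3 : bil P (B *m v) (A *m x) = bil (B^T *m P *m A) v x.
  by rewrite bil_mull bil_mulr.
have h4 : bil M v (K *m x) = - bil (B^T *m P *m A) v x.
  by rewrite bil_mulr MK_eq bilNM.
have h5 : bil M (K *m x) v = - bil (B^T *m P *m A) v x.
  by rewrite bil_mull bil_tr trmx_mul trmxK MT_eq -h4 bil_mulr.
have h6 : bil M (K *m x) (K *m x) = bil (K^T *m M *m K) x x.
  by rewrite bil_mull bil_mulr.
have h7 : bil M v v = bil Rm v v + bil (B^T *m P *m B) v v by rewrite /M bilDM.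
have h8 : bil P (A *m x) (A *m x) = bil (A^T *m P *m A) x x.
  by rewrite bil_mull bil_mulr.
have h9 : bil P (B *m v) (B *m v) = bil (B^T *m P *m B) v v.
  by rewrite bil_mull bil_mulr.
rewrite h1 !bilDl !bilDr !bilNl !bilNr h2 h3 h4 h5 h6 h7 h8 h9.
ring.
Qed.
End CS.
Section Norms.
Context {R : realType}.

Definition mnorm {k l : nat} (M : 'M[R]_(k,l)) : R := \sum_i \sum_j `|M i j|.

Lemma mnorm_ge0 {k l} (M : 'M[R]_(k,l)) : 0 <= mnorm M.
Proof. by apply: sumr_ge0 => i _; apply: sumr_ge0. Qed.

Lemma term_le_sum (I : finType) (f : I -> R) i :
  (forall j, 0 <= f j) -> f i <= \sum_j f j.
Proof. by move=> h; rewrite (bigD1 i) //= lerDl sumr_ge0. Qed.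

Lemma vnorm_ge0 {k} (x : 'cV[R]_k) : 0 <= vnorm x.
Proof. exact: sqrtr_ge0. Qed.

Lemma vnorm_sq {k} (x : 'cV[R]_k) : vnorm x ^+ 2 = \sum_i x i ord0 ^+ 2.
Proof. by rewrite /vnorm sqr_sqrtr // sumr_ge0 // => i _; rewrite sqr_ge0. Qed.

Lemma entry_le_vnorm {k} (x : 'cV[R]_k) i : `|x i ord0| <= vnorm x.
Proof.
have h1 : `|x i ord0| ^+ 2 <= vnorm x ^+ 2.
  by rewrite vnorm_sq real_normK ?num_real // (bigD1 i) //= lerDl sumr_ge0 // => j _; rewrite sqr_ge0.
have h2 := vnorm_ge0 x; have h3 := normr_ge0 (x i ord0).
nra.
Qed.

Lemma sq_sum_le (I : finType) (a : I -> R) :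
  (forall i, 0 <= a i) -> \sum_i a i ^+ 2 <= (\sum_i a i) ^+ 2.
Proof.
move=> h; rewrite expr2 mulr_suml; apply: ler_sum => i _.
rewrite expr2; apply: ler_wpM2l => //; exact: term_le_sum.
Qed.

Lemma vnorm_le_sum {k} (x : 'cV[R]_k) : vnorm x <= \sum_i `|x i ord0|.
Proof.
have h1 : vnorm x ^+ 2 <= (\sum_i `|x i ord0|) ^+ 2.
  have hs := sq_sum_le _ (fun i : 'I_k => `|x i ord0|) (fun i => normr_ge0 _).
  rewrite vnorm_sq; apply: le_trans hs.
  by apply: ler_sum => i _; rewrite real_normK ?num_real.
have h2 := vnorm_ge0 x; have h3 : 0 <= \sum_i `|x i ord0| by rewrite sumr_ge0.
nra.
Qed.

Lemma vnorm_mul_le {k l} (F : 'M[R]_(k,l)) y : vnorm (F *m y) <= mnorm F * vnorm y.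
Proof.
apply: le_trans (vnorm_le_sum _) _.
rewrite /mnorm mulr_suml; apply: ler_sum => i _.
rewrite mxE mulr_suml; apply: le_trans (ler_norm_sum _ _ _) _.
apply: ler_sum => j _; rewrite normrM; apply: ler_wpM2l => //.
exact: entry_le_vnorm.
Qed.

Lemma qform_le_mnorm {k} (M : 'M[R]_k) x : qform M x <= mnorm M * vnorm x ^+ 2.
Proof.
rewrite /qform mxE.
have -> : \sum_j (x^T *m M) ord0 j * x j ord0 = \sum_j \sum_i x i ord0 * M i j * x j ord0.
  by apply: eq_bigr => j _; rewrite mxE mulr_suml; apply: eq_bigr => i _; rewrite mxE.
rewrite /mnorm exchange_big mulr_suml; apply: ler_sum => i _.
rewrite mulr_suml; apply: ler_sum => j _.
apply: le_trans (ler_norm _) _.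
rewrite !normrM.
have hi := entry_le_vnorm x i; have hj := entry_le_vnorm x j.
have h1 := normr_ge0 (x i ord0); have h2 := normr_ge0 (x j ord0); have h3 := normr_ge0 (M i j).
have hv : `|x i ord0| * `|x j ord0| <= vnorm x ^+ 2 by rewrite expr2; apply: ler_pM.
nra.
Qed.

Lemma vnorm_add_sq {k} (a b : 'cV[R]_k) :
  vnorm (a + b) ^+ 2 <= 2 * vnorm a ^+ 2 + 2 * vnorm b ^+ 2.
Proof.
rewrite !vnorm_sq !mulr_sumr -big_split /=; apply: ler_sum => i _.
rewrite mxE. have h := sqr_ge0 (a i ord0 - b i ord0). nra.
Qed.

Lemma vnorm_scale {k} c (x : 'cV[R]_k) : vnorm (c *: x) = `|c| * vnorm x.
Proof.
rewrite /vnorm -sqrtr_sqr -sqrtrM ?sqr_ge0 // mulr_sumr; congr Num.sqrt.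
by apply: eq_bigr => i _; rewrite mxE exprMn.
Qed.

Lemma qformZ {k} (M : 'M[R]_k) c x : qform M (c *: x) = c ^+ 2 * qform M x.
Proof. by rewrite !qformE bilZl bilZr mulrA expr2. Qed.

Lemma vnorm0 {k} : vnorm (0 : 'cV[R]_k) = 0.
Proof. by rewrite /vnorm big1 ?sqrtr0 // => i _; rewrite mxE expr0n. Qed.

Lemma vnorm_eq0 {k} (x : 'cV[R]_k) : vnorm x = 0 -> x = 0.
Proof.
move=> h; apply/matrixP => i j; rewrite ord1 mxE.
have := entry_le_vnorm x i; rewrite h normr_le0 => /eqP //.
Qed.

Lemma young {k} (P : 'M[R]_k) a b tau : P^T = P -> (forall y, 0 <= qform P y) -> 0 < tau ->
  qform P (a + b) <= (1 + tau) * qform P a + (1 + tau^-1) * qform P b.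
Proof.
move=> PT psd tp.
have e : bil P b a = bil P a b by rewrite bil_tr PT.
have Hq : qform P (tau *: a - b) = tau^+2 * bil P a a - 2 * tau * bil P a b + bil P b b.
  rewrite qformE !bilDl !bilDr !bilNl !bilNr !bilZl !bilZr e; ring.
have Hab : qform P (a + b) = bil P a a + 2 * bil P a b + bil P b b.
  rewrite qformE !bilDl !bilDr e; ring.
have H2 : 0 <= tau^-1 * qform P (tau *: a - b) by rewrite mulr_ge0 // invr_ge0 ltW.
rewrite Hq in H2.
have E : tau^-1 * (tau^+2 * bil P a a - 2 * tau * bil P a b + bil P b b)
   = tau * bil P a a - 2 * bil P a b + tau^-1 * bil P b b.
  by field; rewrite gt_eqF.
rewrite E in H2; rewrite Hab !qformE; lra.
Qed.
End Norms.
Arguments mnorm {R k l}.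
Section PD.
Context {R : realType}.

Lemma cont_sum (T : topologicalType) (I : finType) (h : I -> T -> R) :
  (forall i, continuous (h i)) -> continuous (fun t => \sum_i h i t).
Proof.
move=> hc.
suff H : forall s : seq I, continuous (fun t => \sum_(i <- s) h i t) by exact: H.
elim => [|a s IH].
  have -> : (fun t => \sum_(i <- [::]) h i t) = (fun=> 0) by apply: funext => t; rewrite big_nil.
  exact: cst_continuous.
have -> : (fun t => \sum_(i <- a :: s) h i t) = (h a + (fun t => \sum_(i <- s) h i t))%R.
  by apply: funext => t; rewrite big_cons.
by move=> t; apply: continuousD; [exact: hc | exact: IH].
Qed.

Lemma cont_mul (T : topologicalType) (f g : T -> R) :
  continuous f -> continuous g -> continuous (fun t => f t * g t).
Proof. by move=> hf hg t; apply: (continuousM (hf t) (hg t)). Qed.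

End PD.
Section PD2.
Context {R : realType}.

Lemma sphere_min {n} (M : 'M[R]_n) : (forall x, x != 0 -> 0 < qform M x) ->
  exists2 c, 0 < c & forall y, vnorm y = 1 -> c <= qform M y.
Proof.
move=> hM.
have [[y0 hy0]|none] := pselect (exists y : 'cV[R]_n, vnorm y = 1); last first.
  by exists 1 => // y hy; exfalso; apply: none; exists y.
pose g := fun r : 'rV[R]_n => \sum_i r ord0 i ^+ 2.
pose S := [set r : 'rV[R]_n | g r = 1].
pose f := fun r : 'rV[R]_n => qform M r^T.
have gT : forall y : 'cV[R]_n, g y^T = vnorm y ^+ 2.
  by move=> y; rewrite vnorm_sq /g; apply: eq_bigr => i _; rewrite mxE.
have Sne : S !=set0 by exists y0^T; rewrite /S /= gT hy0 expr1n.
have gc : continuous g.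
  apply: cont_sum => i; have -> : (fun r : 'rV[R]_n => r ord0 i ^+ 2) = (fun r => r ord0 i * r ord0 i).
    by apply: funext => r; rewrite expr2.
  by apply: cont_mul; apply: coord_continuous.
have cS : compact S.
  apply: bounded_closed_compact.
    exists 1; split; first by rewrite num_real.
    move=> M1 hM1 r Sr /=.
    rewrite [X in X <= _]/Num.norm /= mx_normrE; apply: bigmax_le; first by rewrite ltW // (lt_trans _ hM1).
    move=> [i j] _ /=; rewrite (ord1 i).
    apply: le_trans (ltW hM1).
    have h1 : r ord0 j ^+ 2 <= 1.
      rewrite -Sr /g (bigD1 j) //= lerDl sumr_ge0 // => k _; exact: sqr_ge0.
    have h2 := normr_ge0 (r ord0 j).
    rewrite -real_normK ?num_real // in h1. nra.
  have -> : S = g @^-1` [set x | x = 1] by [].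
  by apply: preimage_closed; [move=> r _; exact: gc | exact: closed_eq].
have fc : {within S, continuous f}.
  apply: continuous_subspaceT.
  have -> : f = fun r => \sum_j (\sum_i r ord0 i * M i j) * r ord0 j.
    apply: funext => r; rewrite /f /qform trmxK mxE; apply: eq_bigr => j _.
    by rewrite !mxE.
  apply: cont_sum => j; apply: cont_mul; last exact: coord_continuous.
  apply: cont_sum => i; apply: cont_mul; first exact: coord_continuous.
  exact: cst_continuous.
have [c0 Sc0 hmin] := compact_EVT_min Sne cS fc.
exists (f c0).
  apply: hM; apply/eqP => h.
  move: Sc0; rewrite in_setE /S /= -[c0]trmxK gT h vnorm0 expr0n /= => /eqP.
  by rewrite eq_sym oner_eq0.
move=> y hy; have := hmin y^T; rewrite /f trmxK; apply.
by rewrite in_setE /S /= gT hy expr1n.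
Qed.

Lemma pd_lb {n} (M : 'M[R]_n) : (forall x, x != 0 -> 0 < qform M x) ->
  exists2 c, 0 < c & forall x, c * vnorm x ^+ 2 <= qform M x.
Proof.
move=> hM; have [c c0 hc] := sphere_min M hM.
exists c => // x.
have [->|x0] := eqVneq x 0.
  by rewrite vnorm0 qformE bil0l expr0n /= mulr0.
set v := vnorm x.
have vpos : 0 < v.
  rewrite lt_neqAle vnorm_ge0 andbT eq_sym; apply/eqP => h; move/eqP: x0; apply.
  exact: vnorm_eq0.
have h1 : vnorm (v^-1 *: x) = 1 by rewrite vnorm_scale ger0_norm ?invr_ge0 ?ltW // mulVf // gt_eqF.
have := hc _ h1; rewrite qformZ => h2.
have h3 : 0 < v ^+ 2 by rewrite exprn_gt0.
have E : qform M x = v ^+ 2 * (v^-1 ^+ 2 * qform M x) by rewrite mulrA -exprMn divff ?gt_eqF // expr1n mul1r.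
rewrite E; rewrite mulrC; apply: ler_wpM2l => //; exact: ltW.
Qed.
End PD2.
Section Geo.
Context {R : realType}.
Lemma geo_le0 (a C rho : R) : 0 <= rho -> rho < 1 -> (forall N : nat, a <= C * rho ^+ N) -> a <= 0.
Proof.
move=> r0 r1 h.
have hc : (fun N : nat => C * rho ^+ N) @ \oo --> C * 0.
  apply: cvgM; first exact: cvg_cst.
  by apply: cvg_expr; rewrite ger0_norm.
rewrite mulr0 in hc.
have := limr_ge (cvgP _ hc) (nearW _ h).
move=> H. have H2 := H eventually_filter eventually_filter. by rewrite (cvg_lim _ hc) in H2.
Qed.
End Geo.
Section Compare.
Context {R : realType}.
Lemma compare {n} (P' S F : 'M[R]_n) (c : 'cV[R]_n -> R) (qmin smax pm : R) :
  0 < qmin -> 0 <= smax ->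
  (forall y, qform P' y <= qform P' (F *m y) + c y) ->
  (forall y, qform S (F *m y) + c y <= qform S y) ->
  (forall y, qmin * vnorm y ^+ 2 <= c y) ->
  (forall y, 0 <= qform S y) ->
  (forall y, qform S y <= smax * vnorm y ^+ 2) ->
  (forall y, qform P' y <= pm * vnorm y ^+ 2) ->
  forall y, qform P' y <= qform S y.
Proof.
move=> q0 s0 h1 h2 h3 h4 h5 h6 y.
pose g := fun y => qform P' y - qform S y.
have gF : forall y, g y <= g (F *m y).
  move=> z; rewrite /g; have := h1 z; have := h2 z; lra.
have gN : forall N z, g z <= g (iter N (mulmx F) z).
  elim => [|N IH] z //=; apply: le_trans (IH z) _; exact: gF.
pose s := smax + qmin.
have sp : 0 < s by rewrite /s; lra.
pose rho := 1 - qmin / s.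
have r0 : 0 <= rho.
  rewrite /rho subr_ge0 ler_pdivrMr // mul1r /s; lra.
have r1 : rho < 1.
  rewrite /rho; have : 0 < qmin / s by rewrite divr_gt0. lra.
have dec : forall z, qform S (F *m z) <= rho * qform S z.
  move=> z.
  have e1 : qmin / s * qform S z <= qmin * vnorm z ^+ 2.
    have v2 : 0 <= vnorm z ^+ 2 by rewrite sqr_ge0.
    have : qform S z <= s * vnorm z ^+ 2.
      apply: le_trans (h5 z) _; rewrite /s mulrDl lerDl; nra.
    move=> hz; apply: le_trans (ler_wpM2l _ hz) _; first by rewrite ltW // divr_gt0.
    by rewrite mulrA divfK ?gt_eqF.
  have := h2 z; have := h3 z; rewrite /rho; lra.
have decN : forall N z, qform S (iter N (mulmx F) z) <= rho ^+ N * qform S z.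
  elim => [|N IH] z /=; first by rewrite expr0 mul1r.
  apply: le_trans (dec _) _; rewrite exprS -mulrA; exact: ler_wpM2l.
have bnd : forall z, g z <= `|pm| / qmin * qform S z.
  move=> z; rewrite /g.
  have a1 : qmin * vnorm z ^+ 2 <= qform S z.
    apply: le_trans (h3 z) _; have := h2 z; have := h4 (F *m z); lra.
  have a2 : qform P' z <= `|pm| * vnorm z ^+ 2.
    apply: le_trans (h6 z) _; apply: ler_wpM2r; [exact: sqr_ge0 | exact: ler_norm].
  have a3 : `|pm| * vnorm z ^+ 2 <= `|pm| / qmin * qform S z.
    rewrite -mulrA; apply: ler_wpM2l => //.
    by rewrite ler_pdivlMl // .
  have := h4 z; lra.
suff : g y <= 0 by rewrite /g subr_le0.
apply: (@geo_le0 _ _ (`|pm| / qmin * qform S y) rho) => // N.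
apply: le_trans (gN N y) _; apply: le_trans (bnd _) _.
rewrite -[leRHS]mulrA; apply: ler_wpM2l; first by rewrite divr_ge0 // ltW.
rewrite mulrC; exact: decN.
Qed.
End Compare.
Section Setting.
Context {R : realType} {n m p : nat}.
Variables (A : 'cV[R]_p -> 'M[R]_n) (B : 'cV[R]_p -> 'M[R]_(n,m))
  (Q : 'M[R]_n) (Rm : 'M[R]_m) (Theta : set 'cV[R]_p) (P : 'cV[R]_p -> 'M[R]_n).
Hypothesis hQ : sym_posdef Q.
Hypothesis hR : sym_posdef Rm.
Hypothesis hP : forall th, Theta th -> sym_posdef (P th) /\ DARE (A th) (B th) Q Rm (P th).

Definition Kf th := K_LQR (A th) (B th) Rm (P th).

Lemma posdef_psd {k} (M : 'M[R]_k) : sym_posdef M -> forall y, 0 <= qform M y.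
Proof.
move=> [_ h] y; have [->|y0] := eqVneq y 0; first by rewrite qformE bil0l.
exact/ltW/h.
Qed.

Lemma PT {th} : Theta th -> (P th)^T = P th.
Proof. by move=> /hP [[]]. Qed.

Lemma Ppsd {th} : Theta th -> forall y, 0 <= qform (P th) y.
Proof. by move=> /hP [h _]; exact: posdef_psd. Qed.

Lemma Mq th z : qform (Rm + (B th)^T *m P th *m B th) z = qform Rm z + qform (P th) (B th *m z).
Proof. by rewrite !qformE bilDM bil_mull bil_mulr. Qed.

Lemma Munit {th} : Theta th -> (Rm + (B th)^T *m P th *m B th) \in unitmx.
Proof.
move=> th_in.
set M := Rm + _.
rewrite -row_free_unit -kermx_eq0.
case: (pselect (exists i, row i (kermx M) != 0)) => [[i hi]|none]; last first.
  apply/eqP/row_matrixP => i; rewrite row0.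
  by apply/eqP; apply/negPn/negP => h; apply: none; exists i.
exfalso.
set u := row i (kermx M).
have hu : u *m M = 0 by rewrite /u -row_mul mulmx_ker row0.
have h0 : qform M u^T = 0 by rewrite qformE /bil trmxK hu mul0mx mxE.
have uT : u^T != 0 by rewrite trmx_eq0.
have := hR.2 _ uT; have := Ppsd th_in (B th *m u^T).
rewrite /M in h0; rewrite Mq in h0. lra.
Qed.

Lemma CS_th {th} : Theta th -> forall x v,
  qform (P th) (A th *m x + B th *m v) + qform Q x + qform Rm v
  = qform (P th) x + qform (Rm + (B th)^T *m P th *m B th) (v - Kf th *m x).
Proof.
move=> th_in x v; rewrite !qformE.
exact: (CS_identity _ _ _ _ _ _ _ (PT th_in) hR.1 (Munit th_in) (hP th th_in).2).
Qed.

Lemma CSle {th} : Theta th -> forall x v,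
  qform (P th) x <= qform (P th) (A th *m x + B th *m v) + qform Q x + qform Rm v.
Proof.
move=> th_in x v; rewrite (CS_th th_in) Mq lerDl.
by apply: addr_ge0; [exact: posdef_psd | exact: Ppsd].
Qed.

Lemma CSeq {th} : Theta th -> forall x,
  qform (P th) x = qform (P th) (A th *m x + B th *m (Kf th *m x)) + qform Q x + qform Rm (Kf th *m x).
Proof.
move=> th_in x; by rewrite (CS_th th_in) subrr [qform _ 0]qformE bil0l addr0.
Qed.



Lemma local (qmin rmin LA LB : R) : 0 < qmin -> 0 < rmin -> 0 <= LA -> 0 <= LB ->
  (forall y, qmin * vnorm y ^+ 2 <= qform Q y) ->
  (forall z, rmin * vnorm z ^+ 2 <= qform Rm z) ->
  (forall (th th' : 'cV[R]_p) (d : R), 0 <= d -> (forall i, `|th' i ord0 - th i ord0| <= d) -> mnorm (A th' - A th) <= d * LA) ->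
  (forall (th th' : 'cV[R]_p) (d : R), 0 <= d -> (forall i, `|th' i ord0 - th i ord0| <= d) -> mnorm (B th' - B th) <= d * LB) ->
  forall Pb eta : R, 0 < Pb -> 0 < eta -> exists2 delta : R, 0 < delta &
    forall th th', Theta th -> Theta th' ->
      (forall y, qform (P th) y <= Pb * vnorm y ^+ 2) ->
      (forall i, `|th' i ord0 - th i ord0| <= delta) ->
      forall y, qform (P th') y <= qform (P th) y + eta * vnorm y ^+ 2.
Proof.
move=> q0 r0 LA0 LB0 hQl hRl hAL hBL Pb eta Pb0 eta0.
pose s := eta / Pb.
have s0 : 0 < s by rewrite divr_gt0.
pose tau := s * qmin / (2 * (1 + s) * Pb).
have opos : 0 < 1 + s by lra.
have tau0 : 0 < tau.
  rewrite /tau; apply: divr_gt0; first exact: mulr_gt0.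
  by apply: mulr_gt0 => //; apply: mulr_gt0.
pose Lsum := 2 * (LA ^+ 2 + LB ^+ 2 * Pb / rmin).
have Lsum0 : 0 <= Lsum.
  rewrite /Lsum; apply: mulr_ge0 => //; apply: addr_ge0; first exact: sqr_ge0.
  apply: divr_ge0; last exact: ltW.
  by apply: mulr_ge0; [exact: sqr_ge0 | exact: ltW].
pose K1 := (1 + s) * (1 + tau^-1) * Pb * Lsum.
have K10 : 0 <= K1.
  have : 0 < 1 + tau^-1 by rewrite ltr_wpDr // invr_ge0 ltW.
  move=> h; rewrite /K1; apply: mulr_ge0 => //; apply: mulr_ge0; last exact: ltW.
  by apply: mulr_ge0; exact: ltW.
pose delta := Num.min 1 ((s * qmin / 2) / (K1 + 1)).
have sq0 : 0 < s * qmin / 2 by apply: divr_gt0 => //; apply: mulr_gt0.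
have K1p : 0 < K1 + 1 by lra.
have d0 : 0 < delta by rewrite /delta lt_min ltr01 /=; exact: divr_gt0.
have d1 : delta <= 1 by rewrite /delta ge_min lexx.
have d2 : delta <= (s * qmin / 2) / (K1 + 1) by rewrite /delta ge_min lexx orbT.
have Kd : K1 * delta ^+ 2 <= s * qmin / 2.
  have e1 : delta ^+ 2 <= delta by rewrite expr2; nra.
  have e2 := ler_wpM2l (ltW K1p) d2.
  rewrite [_ * (_ / _)]mulrC divfK ?gt_eqF // in e2.
  have e3 := ler_wpM2l K10 e1.
  nra.
exists delta => // th th' th_in th'_in hPb hd.
set K := Kf th.
set F := A th' + B th' *m K.
pose c := fun z => qform Q z + qform Rm (K *m z).
pose S := (1 + s) *: P th.
have qS : forall z, qform S z = (1 + s) * qform (P th) z by move=> z; rewrite !qformE bilZM.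
have Qpsd := posdef_psd _ hQ; have Rpsd := posdef_psd _ hR.
have P0psd := Ppsd th_in.
have h3 : forall z, qmin * vnorm z ^+ 2 <= c z.
  by move=> z; rewrite /c; apply: le_trans (hQl z) _; rewrite lerDl.
have ceq : forall z, qform (P th) z = qform (P th) (A th *m z + B th *m (K *m z)) + c z.
  by move=> z; rewrite /c addrA; exact: CSeq.
have c_le : forall z, c z <= qform (P th) z.
  by move=> z; rewrite ceq lerDr.
have Kz : forall z, vnorm (K *m z) ^+ 2 <= Pb / rmin * vnorm z ^+ 2.
  move=> z.
  have h : rmin * vnorm (K *m z) ^+ 2 <= Pb * vnorm z ^+ 2.
    apply: le_trans (hRl _) _; apply: le_trans (hPb z); apply: le_trans (c_le z).
    rewrite /c lerDr; exact: Qpsd.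
  have rn0 : rmin != 0 by rewrite gt_eqF.
  rewrite -[vnorm (K *m z) ^+ 2](mulKf rn0).
  have -> : Pb / rmin * vnorm z ^+ 2 = rmin^-1 * (Pb * vnorm z ^+ 2) by rewrite [Pb / rmin]mulrC -mulrA.
  by apply: ler_wpM2l => //; rewrite invr_ge0 ltW.
have h2 : forall z, qform S (F *m z) + c z <= qform S z.
  move=> z.
  set Acl := A th *m z + B th *m (K *m z).
  set E := (A th' - A th) *m z + (B th' - B th) *m (K *m z).
  have FE : F *m z = Acl + E.
    rewrite /F /Acl /E mulmxDl -mulmxA !mulmxBl.
    by rewrite addrACA ![_ + (_ - _)]addrC !subrK.
  have hy := young (P th) Acl E tau (PT th_in) P0psd tau0.
  have hE : qform (P th) E <= Pb * (delta ^+ 2 * Lsum * vnorm z ^+ 2).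
    apply: le_trans (hPb E) _; apply: ler_wpM2l; first exact: ltW.
    apply: le_trans (vnorm_add_sq _ _) _.
    have a1 : vnorm ((A th' - A th) *m z) <= delta * LA * vnorm z.
      apply: le_trans (vnorm_mul_le _ _) _; apply: ler_wpM2r; first exact: vnorm_ge0.
      by apply: hAL => //; exact: ltW.
    have a2 : vnorm ((B th' - B th) *m (K *m z)) <= delta * LB * vnorm (K *m z).
      apply: le_trans (vnorm_mul_le _ _) _; apply: ler_wpM2r; first exact: vnorm_ge0.
      by apply: hBL => //; exact: ltW.
    have b1 : vnorm ((A th' - A th) *m z) ^+ 2 <= (delta * LA * vnorm z) ^+ 2.
      by rewrite ler_sqr ?nnegrE ?vnorm_ge0 // !mulr_ge0 ?vnorm_ge0 // ltW.
    have b2 : vnorm ((B th' - B th) *m (K *m z)) ^+ 2 <= (delta * LB * vnorm (K *m z)) ^+ 2.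
      by rewrite ler_sqr ?nnegrE ?vnorm_ge0 // !mulr_ge0 ?vnorm_ge0 // ltW.
    have b3 : (delta * LB * vnorm (K *m z)) ^+ 2 <= delta ^+ 2 * LB ^+ 2 * (Pb / rmin * vnorm z ^+ 2).
      rewrite !exprMn; apply: ler_wpM2l; first by rewrite mulr_ge0 ?sqr_ge0.
      exact: Kz.
    have -> : delta ^+ 2 * Lsum * vnorm z ^+ 2 =
       2 * (delta * LA * vnorm z) ^+ 2 + 2 * (delta ^+ 2 * LB ^+ 2 * (Pb / rmin * vnorm z ^+ 2)).
      by rewrite /Lsum !exprMn; field; rewrite gt_eqF.
    lra.
  rewrite FE !qS.
  have T1 : (1 + s) * tau * (qform (P th) Acl) <= s * qmin / 2 * vnorm z ^+ 2.
    have : qform (P th) Acl <= Pb * vnorm z ^+ 2.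
      apply: le_trans (hPb z); rewrite (ceq z) lerDl /c.
      by apply: addr_ge0; [exact: Qpsd | exact: Rpsd].
    move=> hA1.
    have -> : s * qmin / 2 * vnorm z ^+ 2 = (1 + s) * tau * (Pb * vnorm z ^+ 2).
      by rewrite /tau; field; rewrite !gt_eqF.
    by apply: ler_wpM2l => //; rewrite mulr_ge0 // ltW.
  have T2 : (1 + s) * (1 + tau^-1) * qform (P th) E <= s * qmin / 2 * vnorm z ^+ 2.
    have e0 : 0 <= (1 + s) * (1 + tau^-1).
      apply: mulr_ge0; first exact: ltW.
      by apply: addr_ge0 => //; rewrite invr_ge0 ltW.
    apply: le_trans (ler_wpM2l e0 hE) _.
    have -> : (1 + s) * (1 + tau^-1) * (Pb * (delta ^+ 2 * Lsum * vnorm z ^+ 2)) = K1 * delta ^+ 2 * vnorm z ^+ 2.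
      by rewrite /K1; ring.
    by apply: ler_wpM2r; [exact: sqr_ge0 | exact: Kd].
  have T3 : s * qmin * vnorm z ^+ 2 <= s * c z.
    by rewrite -mulrA; apply: ler_wpM2l; [exact: ltW | exact: h3].
  have E1 : qform (P th) z = qform (P th) Acl + c z by exact: ceq.
  rewrite E1.
  have hy' : (1 + s) * qform (P th) (Acl + E) <= (1 + s) * ((1 + tau) * qform (P th) Acl + (1 + tau^-1) * qform (P th) E).
    by apply: ler_wpM2l => //; rewrite ltW.
  apply: le_trans (lerD hy' (lexx (c z))) _.
  have -> : (1 + s) * ((1 + tau) * qform (P th) Acl + (1 + tau^-1) * qform (P th) E) + c z
     = (1 + s) * qform (P th) Acl + (1 + s) * tau * qform (P th) Acl + (1 + s) * (1 + tau^-1) * qform (P th) E + c z.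
    by ring.
  have -> : (1 + s) * (qform (P th) Acl + c z) = (1 + s) * qform (P th) Acl + c z + s * c z by ring.
  lra.
have h1 : forall z, qform (P th') z <= qform (P th') (F *m z) + c z.
  move=> z; rewrite /c addrA.
  have -> : F *m z = A th' *m z + B th' *m (K *m z) by rewrite /F mulmxDl mulmxA.
  exact: CSle.
have h4 : forall z, 0 <= qform S z by move=> z; rewrite qS mulr_ge0 // ltW.
have h5 : forall z, qform S z <= (1 + s) * Pb * vnorm z ^+ 2.
  by move=> z; rewrite qS -mulrA; apply: ler_wpM2l; [rewrite ltW | exact: hPb].
have h6 : forall z, qform (P th') z <= mnorm (P th') * vnorm z ^+ 2 by move=> z; exact: qform_le_mnorm.
move=> y.
have hs0 : 0 <= (1 + s) * Pb by rewrite mulr_ge0 // ltW.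
apply: le_trans (compare _ _ _ _ _ _ _ q0 hs0 h1 h2 h3 h4 h5 h6 y) _.
rewrite qS mulrDl mul1r lerD2l.
have -> : eta = s * Pb by rewrite /s divfK // gt_eqF.
by rewrite -mulrA; apply: ler_wpM2l; [exact: ltW | exact: hPb].
Qed.



Lemma entry_le_mxnorm {k l} (x : 'M[R]_(k,l)) a b : `|x a b| <= `|x|.
Proof.
rewrite [X in _ <= X]/Num.norm /= mx_normrE.
exact: (le_bigmax _ (fun ij : 'I_k * 'I_l => `|x ij.1 ij.2|) (a, b)).
Qed.

Lemma Pbound (qmin rmin LA LB : R) : 0 < qmin -> 0 < rmin -> 0 <= LA -> 0 <= LB ->
  (forall y, qmin * vnorm y ^+ 2 <= qform Q y) ->
  (forall z, rmin * vnorm z ^+ 2 <= qform Rm z) ->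
  (forall (th th' : 'cV[R]_p) (d : R), 0 <= d -> (forall i, `|th' i ord0 - th i ord0| <= d) -> mnorm (A th' - A th) <= d * LA) ->
  (forall (th th' : 'cV[R]_p) (d : R), 0 <= d -> (forall i, `|th' i ord0 - th i ord0| <= d) -> mnorm (B th' - B th) <= d * LB) ->
  compact Theta ->
  exists2 Pmax : R, 0 < Pmax & forall th, Theta th -> forall y, qform (P th) y <= Pmax * vnorm y ^+ 2.
Proof.
move=> q0 r0 LA0 LB0 hQl hRl hAL hBL cT.
have loc := local _ _ _ _ q0 r0 LA0 LB0 hQl hRl hAL hBL.
have hd : forall th, exists d : R, Theta th -> 0 < d /\ forall th', Theta th' ->
    (forall i, `|th' i ord0 - th i ord0| <= d) ->
    forall y, qform (P th') y <= (mnorm (P th) + 2) * vnorm y ^+ 2.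
  move=> th.
  have Pb0 : 0 < mnorm (P th) + 1 by have := mnorm_ge0 (P th); lra.
  have [d d0 hd] := loc _ 1 Pb0 ltr01.
  exists d => th_in; split => // th' th'_in hi y.
  have hb : forall y, qform (P th) y <= (mnorm (P th) + 1) * vnorm y ^+ 2.
    move=> z; apply: le_trans (qform_le_mnorm _ _) _; apply: ler_wpM2r; first exact: sqr_ge0.
    by rewrite lerDl.
  apply: le_trans (hd th th' th_in th'_in hb hi y) _.
  have := qform_le_mnorm (P th) y; have := sqr_ge0 (vnorm y); lra.
have [dfun hdf] := choice hd.
rewrite compact_cover in cT.
have hcv : Theta `<=` cover Theta (fun th => ball th (dfun th)).
  by move=> th th_in; exists th => //; apply: ballxx; exact: (hdf th th_in).1.
have [D' sD' hcov] := cT _ Theta (fun th => ball th (dfun th)) (fun i _ => ball_open _ _) hcv.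
pose Pmax := \sum_(i <- finmap.enum_fset D') (mnorm (P i) + 2) + 1.
have Pmax0 : 0 < Pmax.
  rewrite /Pmax; have : 0 <= \sum_(i <- finmap.enum_fset D') (mnorm (P i) + 2).
    by apply: sumr_ge0 => i _; have := mnorm_ge0 (P i); lra.
  lra.
exists Pmax => // th th_in y.
have [i iD hb] := hcov th th_in.
have iTh : Theta i by have := sD' i iD; rewrite in_setE.
have hi : forall a, `|th a ord0 - i a ord0| <= dfun i.
  move=> a; move: hb; rewrite -ball_normE /ball_ /= => hb.
  apply: ltW; apply: le_lt_trans hb.
  by rewrite distrC; have := entry_le_mxnorm (i - th) a ord0; rewrite !mxE.
apply: le_trans ((hdf i iTh).2 th th_in hi y) _.
apply: ler_wpM2r; first exact: sqr_ge0.
rewrite /Pmax (bigD1_seq i) //=.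
have : 0 <= \sum_(j <- finmap.enum_fset D' | j != i) (mnorm (P j) + 2).
  by apply: sumr_ge0 => j _; have := mnorm_ge0 (P j); lra.
lra.
Qed.

End Setting.
Section Affine.
Context {R : realType}.

Lemma mnorm_scale_sum {k l} (I : finType) (c : I -> R) (F : I -> 'M[R]_(k,l)) :
  mnorm (\sum_i c i *: F i) <= \sum_i `|c i| * mnorm (F i).
Proof.
apply: le_trans (_ : _ <= \sum_a \sum_b \sum_i `|c i| * `|F i a b|) _.
  apply: ler_sum => a _; apply: ler_sum => b _.
  rewrite summxE; apply: le_trans (ler_norm_sum _ _ _) _.
  by apply: ler_sum => i _; rewrite mxE normrM.
rewrite le_eqVlt; apply/orP; left; apply/eqP.
under eq_bigr => a _ do rewrite exchange_big.
rewrite exchange_big; apply: eq_bigr => i _.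
rewrite /mnorm mulr_sumr; apply: eq_bigr => a _.
by rewrite mulr_sumr.
Qed.

Lemma affine_lip {p k l} (f : 'cV[R]_p -> 'M[R]_(k,l)) : affine_map f ->
  exists2 L : R, 0 <= L & forall (th th' : 'cV[R]_p) (d : R), 0 <= d ->
    (forall i, `|th' i ord0 - th i ord0| <= d) -> mnorm (f th' - f th) <= d * L.
Proof.
move=> [F0 [F hF]].
exists (\sum_i mnorm (F i)); first by apply: sumr_ge0 => i _; exact: mnorm_ge0.
move=> th th' d d0 hd.
have -> : f th' - f th = \sum_i (th' i ord0 - th i ord0) *: F i.
  rewrite !hF opprD addrACA subrr add0r -sumrB.
  by apply: eq_bigr => i _; rewrite scalerBl.
apply: le_trans (mnorm_scale_sum _ _ _) _.
rewrite mulr_sumr; apply: ler_sum => i _.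
apply: ler_wpM2r; [exact: mnorm_ge0 | exact: hd].
Qed.
End Affine.

Theorem proposition2 (R : realType) (n m p : nat)
  (hn : (0 < n)%N) (hm : (0 < m)%N) (hp : (0 < p)%N)
  (A : 'cV[R]_p -> 'M[R]_n) (B : 'cV[R]_p -> 'M[R]_(n, m))
  (Q : 'M[R]_n) (Rm : 'M[R]_m)
  (Theta : set 'cV[R]_p)
  (P : 'cV[R]_p -> 'M[R]_n)
  (Wbar mu X : R)
  (x : nat -> 'cV[R]_n) (u : nat -> 'cV[R]_m) (w : nat -> 'cV[R]_n)
  (theta thetahat : nat -> 'cV[R]_p) :
  affine_map A -> affine_map B ->
  sym_posdef Q -> sym_posdef Rm ->
  compact Theta -> convex_set Theta ->
  (forall th, Theta th -> stabilizable (A th) (B th)) ->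
  (* P(theta) is the (unique) positive definite solution of the DARE *)
  (forall th, Theta th -> sym_posdef (P th) /\ DARE (A th) (B th) Q Rm (P th)) ->
  (* dynamics *)
  (forall k, x k.+1 = A (theta k) *m x k + B (theta k) *m u k + w k) ->
  (* (i) bounded disturbance *)
  0 <= Wbar -> (forall k, vnorm (w k) <= Wbar) ->
  (* (ii) parameters in Theta *)
  (forall k, Theta (theta k)) ->
  0 < mu ->
  (forall k, Theta (thetahat k)) ->
  (* certainty-equivalent LQR input *)
  (forall k, u k = K_LQR (A (thetahat k)) (B (thetahat k)) Rm (P (thetahat k)) *m x k) ->
  (* estimate update bound, with e_{1|k} = x_{k+1} - xhat_{1|k} - w_k *)
  (forall k,
     let xhat := A (thetahat k) *m x k + B (thetahat k) *m u k in
     let e := x k.+1 - xhat - w k in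
     vnorm (thetahat k.+1 - thetahat k) <= Num.sqrt mu * vnorm (e + w k)) ->
  (* uniformly bounded state *)
  0 < X -> (forall k, vnorm (x k) <= X) ->
  exists alpha beta gamma : R, 0 < alpha /\ 0 < beta /\ 0 < gamma /\
    forall k,
      let xhat := A (thetahat k) *m x k + B (thetahat k) *m u k in
      let e := x k.+1 - xhat - w k in
      qform (P (thetahat k.+1)) (x k.+1) - qform (P (thetahat k)) (x k)
        <= - alpha * vnorm (x k) ^+ 2 + beta * vnorm e ^+ 2
           + gamma * vnorm (w k) ^+ 2.
Proof.
move=> hA hB hQ hR cT _ _ hP _ _ _ _ mu0 hthh hu hest X0 hX.
have [qmin q0 hQl] := pd_lb Q hQ.2.
have [rmin r0 hRl] := pd_lb Rm hR.2.
have [LA LA0 hAL] := affine_lip A hA.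
have [LB LB0 hBL] := affine_lip B hB.
have [Pmax Pm0 hPm] := Pbound A B Q Rm Theta P hQ hR hP _ _ _ _ q0 r0 LA0 LB0 hQl hRl hAL hBL cT.
pose eta := qmin ^+ 2 / (8 * Pmax).
have eta0 : 0 < eta by apply: divr_gt0; [exact: exprn_gt0 | exact: mulr_gt0].
have [delta d0 hloc] := local A B Q Rm Theta P hQ hR hP _ _ _ _ q0 r0 LA0 LB0 hQl hRl hAL hBL Pmax eta Pm0 eta0.
pose eps := qmin / (4 * Pmax).
have eps0 : 0 < eps by apply: divr_gt0 => //; exact: mulr_gt0.
pose C1 := (1 + eps^-1) * Pmax.
have C10 : 0 <= C1 by apply: mulr_ge0; [rewrite addr_ge0 // invr_ge0 ltW | exact: ltW].
pose C3 := Pmax * (2 * (Pmax / qmin) * X ^+ 2 * mu / delta ^+ 2 + 2).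
have C30 : 0 <= C3.
  apply: mulr_ge0; first exact: ltW.
  apply: addr_ge0 => //; apply: divr_ge0; last exact: sqr_ge0.
  apply: mulr_ge0; last exact: ltW.
  apply: mulr_ge0; last exact: sqr_ge0.
  by apply: mulr_ge0 => //; apply: divr_ge0; exact: ltW.
pose C2 := 2 * eta + C3.
have C20 : 0 <= C2 by rewrite /C2; have := ltW eta0; lra.
exists (qmin / 2), (2 * (C1 + C2) + 1), (2 * (C1 + C2) + 1).
split; first by apply: divr_gt0.
split; first by have := C10; have := C20; lra.
split; first by have := C10; have := C20; lra.
move=> k; cbv zeta.
set xhat := A (thetahat k) *m x k + B (thetahat k) *m u k.
set e := x k.+1 - xhat - w k.
set th := thetahat k.
set th' := thetahat k.+1.
set x0 := x k.
have th_in : Theta th by exact: hthh.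
have th'_in : Theta th' by exact: hthh.
set K := Kf A B Rm P th.
pose d := e + w k.
have xk1 : x k.+1 = xhat + d by rewrite /d /e subrK addrC subrK.
have xhatE : xhat = A th *m x0 + B th *m (K *m x0) by rewrite /xhat hu.
have hk : vnorm (th' - th) <= Num.sqrt mu * vnorm d := hest k.
have Ppsd0 := Ppsd A B Q Rm Theta P hP th_in.
have Qpsd := posdef_psd _ hQ; have Rpsd := posdef_psd _ hR.
set v := vnorm x0 ^+ 2.
set D := vnorm d ^+ 2.
have v0 : 0 <= v by exact: sqr_ge0.
have D0 : 0 <= D by exact: sqr_ge0.
have Plow : forall th0, Theta th0 -> forall y, qmin * vnorm y ^+ 2 <= qform (P th0) y.
  move=> th0 th0_in y; rewrite (CSeq A B Q Rm Theta P hR hP th0_in y).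
  apply: le_trans (hQl y) _.
  have := Ppsd A B Q Rm Theta P hP th0_in (A th0 *m y + B th0 *m (Kf A B Rm P th0 *m y)).
  have := Rpsd (Kf A B Rm P th0 *m y); lra.
have ceq := CSeq A B Q Rm Theta P hR hP th_in x0.
rewrite -xhatE in ceq.
have hxhat : qform (P th) xhat <= qform (P th) x0 - qmin * v.
  have := hQl x0; have := Rpsd (K *m x0); rewrite -/v; lra.
have hPx : qform (P th) x0 <= Pmax * v by exact: hPm.
have hxh2 : vnorm xhat ^+ 2 <= Pmax / qmin * v.
  have h1 := Plow th th_in xhat.
  have h2 : qmin * vnorm xhat ^+ 2 <= Pmax * v.
    apply: le_trans h1 _; apply: le_trans hxhat _.
    have : 0 <= qmin * v by apply: mulr_ge0 => //; exact: ltW.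
    lra.
  have qn0 : qmin != 0 by rewrite gt_eqF.
  rewrite -[vnorm xhat ^+ 2](mulKf qn0).
  have -> : Pmax / qmin * v = qmin^-1 * (Pmax * v) by rewrite [Pmax / qmin]mulrC -mulrA.
  by apply: ler_wpM2l => //; rewrite invr_ge0 ltW.
have hx1 : vnorm (x k.+1) ^+ 2 <= 2 * (Pmax / qmin * v) + 2 * D.
  rewrite xk1; apply: le_trans (vnorm_add_sq _ _) _; rewrite -/D; lra.
have part1 : qform (P th) (x k.+1) - qform (P th) x0 <= - (3 / 4 * qmin) * v + C1 * D.
  rewrite xk1.
  have hy := young (P th) xhat d eps (PT A B Q Rm Theta P hP th_in) Ppsd0 eps0.
  have hd : qform (P th) d <= Pmax * D by exact: hPm.
  have t1 : (1 + eps) * qform (P th) xhat <= (1 + eps) * (qform (P th) x0 - qmin * v).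
    by apply: ler_wpM2l => //; rewrite addr_ge0 // ltW.
  have t2 : (1 + eps^-1) * qform (P th) d <= C1 * D.
    by rewrite /C1 -mulrA; apply: ler_wpM2l => //; rewrite addr_ge0 // invr_ge0 ltW.
  have t3 : eps * qform (P th) x0 <= qmin / 4 * v.
    have -> : qmin / 4 * v = eps * (Pmax * v) by rewrite /eps; field; rewrite gt_eqF.
    by apply: ler_wpM2l => //; exact: ltW.
  have t4 : 0 <= eps * (qmin * v) by apply: mulr_ge0; [exact: ltW | apply: mulr_ge0 => //; exact: ltW].
  have E1 : (1 + eps) * (qform (P th) x0 - qmin * v) = qform (P th) x0 - qmin * v + eps * qform (P th) x0 - eps * (qmin * v) by ring.
  have E2 : - (3 / 4 * qmin) * v = - (qmin * v) + qmin / 4 * v by field.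
  lra.
have part2 : qform (P th') (x k.+1) - qform (P th) (x k.+1) <= qmin / 4 * v + C2 * D.
  have [small|big] := leP (vnorm (th' - th)) delta.
    have hi : forall i, `|th' i ord0 - th i ord0| <= delta.
      move=> i; apply: le_trans small; have := entry_le_vnorm (th' - th) i; rewrite !mxE.
      by [].
    have := hloc th th' th_in th'_in (hPm th th_in) hi (x k.+1).
    have e1 : eta * vnorm (x k.+1) ^+ 2 <= qmin / 4 * v + 2 * eta * D.
      apply: le_trans (ler_wpM2l (ltW eta0) hx1) _.
      have -> : eta * (2 * (Pmax / qmin * v) + 2 * D) = qmin / 4 * v + 2 * eta * D.
        by rewrite /eta; field; rewrite !gt_eqF.
      by [].
    have : 2 * eta * D <= C2 * D by apply: ler_wpM2r => //; rewrite /C2; lra.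
    lra.
  have hdD : delta ^+ 2 <= mu * D.
    have h1 : delta <= Num.sqrt mu * vnorm d by apply: ltW; apply: lt_le_trans big hk.
    have h2 : 0 <= delta by exact: ltW.
    have h3 : delta ^+ 2 <= (Num.sqrt mu * vnorm d) ^+ 2.
      by rewrite ler_sqr ?nnegrE // mulr_ge0 ?sqrtr_ge0 ?vnorm_ge0.
    by rewrite exprMn sqr_sqrtr ?(ltW mu0) in h3.
  have hv : v <= X ^+ 2.
    have := hX k; have := vnorm_ge0 x0; rewrite /v -/x0; nra.
  have hXD : X ^+ 2 <= X ^+ 2 * mu / delta ^+ 2 * D.
    have dd : 0 < delta ^+ 2 by exact: exprn_gt0.
    have r : 1 <= mu * D / delta ^+ 2 by rewrite ler_pdivlMr // mul1r.
    have -> : X ^+ 2 * mu / delta ^+ 2 * D = X ^+ 2 * (mu * D / delta ^+ 2) by ring.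
    rewrite -[X in X <= _]mulr1; apply: ler_wpM2l => //; exact: sqr_ge0.
  have hP' : qform (P th') (x k.+1) <= Pmax * vnorm (x k.+1) ^+ 2 by exact: hPm.
  have hPx1 : 0 <= qform (P th) (x k.+1) by exact: Ppsd0.
  have e2 : Pmax * vnorm (x k.+1) ^+ 2 <= C3 * D.
    apply: le_trans (ler_wpM2l (ltW Pm0) hx1) _.
    have e3 : Pmax / qmin * v <= Pmax / qmin * (X ^+ 2 * mu / delta ^+ 2 * D).
      apply: ler_wpM2l; first by apply: divr_ge0; exact: ltW.
      exact: le_trans hv hXD.
    have -> : C3 * D = Pmax * (2 * (Pmax / qmin * (X ^+ 2 * mu / delta ^+ 2 * D)) + 2 * D).
      by rewrite /C3; field; rewrite !gt_eqF.
    apply: ler_wpM2l; first exact: ltW.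
    lra.
  have : 0 <= qmin / 4 * v by apply: mulr_ge0 => //; apply: divr_ge0 => //; exact: ltW.
  have : 2 * eta * D >= 0 by apply: mulr_ge0 => //; apply: mulr_ge0 => //; exact: ltW.
  rewrite /C2; lra.
have hD : D <= 2 * vnorm e ^+ 2 + 2 * vnorm (w k) ^+ 2 by exact: vnorm_add_sq.
have hC : (C1 + C2) * D <= (2 * (C1 + C2) + 1) * vnorm e ^+ 2 + (2 * (C1 + C2) + 1) * vnorm (w k) ^+ 2.
  have := sqr_ge0 (vnorm e); have := sqr_ge0 (vnorm (w k)).
  have := ler_wpM2l (addr_ge0 C10 C20) hD.
  lra.
have E : C1 * D + C2 * D = (C1 + C2) * D by ring.
have : - (qmin / 2) * v = - (3 / 4 * qmin) * v + qmin / 4 * v by field.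
lra.
Qed.
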